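(* Let $\Theta\subset\mathbb R^m$ be compact. For each $\theta\in\Theta$ let $f_\theta:S_{\pi_0}\to\mathbb R$ be bounded and measurable. Assume (i) for $d_0$-a.e. $x$ and every $\theta\in\Theta$, the map $a\mapsto f_\theta(x,a)$ is continuous on $S_x$; and (ii) the map $\Theta\to\ell_\infty(S_{\pi_0})$, $\theta\mapsto f_\theta$, is continuous. Define \[ R_\theta(x,a):=f_\theta(x,a)-\mathbb E_{A\sim\pi_0(\cdot\mid x)}[f_\theta(x,A)]. \] Then $\mathcal F^{\mathrm{nn}}_\Theta:=\{R_\theta:\theta\in\Theta\}$ is compact under $\|\cdot\|_{\infty,\mathrm{supp}(\pi_0)}$, and for every $\theta\in\Theta$ the map $a\mapsto R_\theta(x,a)$ is continuous on $S_x$ for $d_0$-a.e. $x$.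
   Context: $\mathcal X$ is a measurable space with probability distribution $d_0$; $\mathcal A$ is a separable metric space; $\pi_0:\mathcal X\to\Delta(\mathcal A)$ is a Markov kernel. $S_x:=\mathrm{supp}(\pi_0(\cdot\mid x))$ is the topological support, $S_{\pi_0}:=\{(x,a):a\in S_x\}$, $\ell_\infty(S_{\pi_0})$ is the space of bounded functions on $S_{\pi_0}$ with the sup norm, and $\|f\|_{\infty,\mathrm{supp}(\pi_0)}:=\sup_{(x,a)\in S_{\pi_0}}|f(x,a)|$. *)

(* Defs.v *)
From HB Require Import structures.
From mathcomp Require Import all_boot all_order all_algebra.
From mathcomp Require Import all_classical all_reals all_analysis.
Set Implicit Arguments. Unset Strict Implicit. Unset Printing Implicit Defensive.
Import Order.TTheory GRing.Theory Num.Theory.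
Import numFieldNormedType.Exports.
Local Open Scope classical_set_scope.
Local Open Scope ring_scope.

Definition borelT (T : ptopologicalType) := g_sigma_algebraType (@open T).

Definition separable (T : topologicalType) :=
  exists D : set T, countable D /\ dense D.

Definition supp (R : realType) (T : ptopologicalType)
  (mu : {measure set (borelT T) -> \bar R}) : set T :=
  [set a : T | forall U : set T, open U -> U a -> (0 < mu U)%E].

Definition Spi (R : realType) d (X : measurableType d) (T : ptopologicalType)
  (pi0 : R.-pker X ~> borelT T) : set (X * T) :=
  [set p | supp (pi0 p.1) p.2].

Definition supdist (R : realType) (X T : Type) (S : set (X * T))
  (g h : X -> T -> R) : \bar R :=
  ereal_sup [set (`|g p.1 p.2 - h p.1 p.2|)%:E | p in S].

Definition supopen (R : realType) (X T : Type) (S : set (X * T))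
  (U : set (X -> T -> R)) :=
  forall g, U g -> exists2 e : R, 0 < e &
    forall h, (supdist S g h < e%:E)%E -> U h.

Definition supcompact (R : realType) (X T : Type) (S : set (X * T))
  (F : set (X -> T -> R)) :=
  forall (I : Type) (U : I -> set (X -> T -> R)),
    (forall i, supopen S (U i)) -> F `<=` \bigcup_i U i ->
    exists2 J : set I, finite_set J & F `<=` \bigcup_(i in J) U i.

(* R_theta(x,a) = f_theta(x,a) - E_{A ~ pi0(.|x)} f_theta(x,A)
   (the expectation is taken over the support S_x, where f_theta is defined). *)
Definition resid (R : realType) d (X : measurableType d) (T : ptopologicalType)
  (pi0 : R.-pker X ~> borelT T) (Th : Type) (f : Th -> X -> T -> R)
  (th : Th) (x : X) (a : T) : R :=
  f th x a - Rintegral (pi0 x) (supp (pi0 x)) (f th x : borelT T -> R).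

(* Main.v *)
Require Import Defs.
From HB Require Import structures.
From mathcomp Require Import all_boot all_order all_algebra.
From mathcomp Require Import all_classical all_reals all_analysis.
From mathcomp Require Import ring lra.
From mathcomp Require Import finmap.
Import Order.TTheory GRing.Theory Num.Theory.
Import numFieldNormedType.Exports.
Local Open Scope classical_set_scope.
Local Open Scope ring_scope.

Lemma int_close (R : realType) d (T : measurableType d) (mu : measure T R)
  (mu1 : mu setT = 1%E) (D : set T) (g h : T -> R) (M e : R) :
  measurable D -> measurable_fun D g -> measurable_fun D h ->
  (forall a, D a -> `|g a| <= M) -> (forall a, D a -> `|h a| <= M) ->
  0 <= e -> (forall a, D a -> `|g a - h a| <= e) ->
  `|Rintegral mu D g - Rintegral mu D h| <= e.
Proof.
move=> mD mg mh gM hM e0 ghe.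
have muD1 : (mu D <= 1)%E.
  by rewrite -mu1; apply: le_measure; [exact/mem_set|exact/mem_set/measurableT|by []].
have muDfin : (mu D < +oo)%E by apply: le_lt_trans muD1 _; exact: ltey.
have bnd : forall k : T -> R, (forall a, D a -> `|k a| <= M) -> [bounded k x | x in D].
  move=> k kM; rewrite /bounded_near; near=> y.
  move=> x Dx /=; apply: le_trans (kM _ Dx) _.
  by near: y; apply: nbhs_pinfty_ge; exact: num_real.
have ig : mu.-integrable D (EFin \o g) by apply: measurable_bounded_integrable => //; exact: bnd.
have ih : mu.-integrable D (EFin \o h) by apply: measurable_bounded_integrable => //; exact: bnd.
rewrite -RintegralB //.
apply: le_trans; first exact: le_normr_Rintegral (integrableB mD ig ih).
apply: le_trans.
  apply: (@le_Rintegral _ _ _ mu D _ (fun=> e)) => //.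
  - apply: integrable_norm. exact: (integrableB mD ig ih).
  - by apply: measurable_bounded_integrable => //; exact: bounded_cst.
rewrite Rintegral_cst //.
rewrite -[leRHS]mulr1 ler_wpM2l //.
have := muD1; case E: (mu D) => [r| |] //=; rewrite ?lee_fin //.
Unshelve. all: by end_near. Qed.

Lemma supp_meas (R : realType) (T : ptopologicalType)
  (mu : {measure set (borelT T) -> \bar R}) :
  measurable (supp mu : set (borelT T)).
Proof.
rewrite -[supp mu]setCK; apply: measurableC; apply: sub_sigma_algebra.
rewrite openE => a /= Na.
have [U [oU Ua nU]] : exists U : set T, [/\ open U, U a & ~ (0 < mu U)%E].
  apply: contra_notP Na => H V oV Va.
  by apply: contra_notP H => nV; exists V.
apply: (@filterS _ _ _ U); last by apply: open_nbhs_nbhs; split.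
by move=> b Ub Sb; apply: nU; exact: Sb.
Qed.
Theorem proposition2 (R : realType) (d : measure_display) (X : measurableType d)
  (d0 : probability X R)
  (A : pseudoPMetricType R) (hA : hausdorff_space A) (sepA : separable A)
  (pi0 : R.-pker X ~> borelT A)
  (m : nat) (Theta : set 'rV[R]_m) (cTheta : compact Theta)
  (f : 'rV[R]_m -> X -> A -> R)
  (f_bdd : forall th, Theta th ->
     exists M : R, forall x a, supp (pi0 x) a -> `|f th x a| <= M)
  (f_meas : forall th, Theta th -> forall x,
     measurable_fun (supp (pi0 x) : set (borelT A)) (f th x : borelT A -> R))
  (f_cont : {ae d0, forall x, forall th, Theta th ->
     {within supp (pi0 x), continuous (f th x)}})
  (f_Theta : forall th, Theta th -> forall e : R, 0 < e ->
     exists2 delta : R, 0 < delta & forall th', Theta th' ->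
       `|th - th'| < delta -> (supdist (Spi pi0) (f th) (f th') < e%:E)%E) :
  supcompact (Spi pi0) [set resid pi0 f th | th in Theta] /\
  (forall th, Theta th -> {ae d0, forall x,
     {within supp (pi0 x), continuous (resid pi0 f th x)}}).
Proof.
split; last first.
  move=> th Th; apply: filterS f_cont => x /(_ th Th) hc a.
  rewrite /resid; apply: cvgB; [exact: hc | exact: cvg_cst].
have close : forall th, Theta th -> forall e : R, 0 < e ->
    exists2 dl : R, 0 < dl & forall th', Theta th' -> `|th - th'| < dl ->
      (supdist (Spi pi0) (resid pi0 f th) (resid pi0 f th') < e%:E)%E.
  move=> th Th e e0.
  have e40 : 0 < e / 4 by rewrite divr_gt0.
  have [dl dl0 Hdl] := f_Theta th Th _ e40.
  exists dl => // th' Th' lt.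
  have Hs := Hdl th' Th' lt.
  have pt : forall x a, supp (pi0 x) a -> `|f th x a - f th' x a| <= e / 4.
    move=> x a xa; apply/ltW; rewrite -lte_fin; apply: le_lt_trans Hs.
    by apply: ereal_sup_ubound; exists (x, a).
  have [M1 HM1] := f_bdd th Th.
  have [M2 HM2] := f_bdd th' Th'.
  apply: (@le_lt_trans _ _ (e / 2)%:E); last by rewrite lte_fin ltr_pdivrMr // ltr_pMr // ltr1n.
  apply: ge_ereal_sup => _ [[x a] /= xa <-]; rewrite lee_fin /resid.
  rewrite (_ : forall u v w z : R, (u - v) - (w - z) = (u - w) - (v - z)); last by move=> *; ring.
  have -> : e / 2 = e / 4 + e / 4 by field.
  apply: le_trans (ler_normD _ _) _; apply: lerD; first exact: pt.
  rewrite normrN; apply: (@int_close _ _ _ (pi0 x) (prob_kernel x) _ _ _ (Num.max M1 M2)).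
  - exact: supp_meas.
  - exact: f_meas.
  - exact: f_meas.
  - by move=> b xb; rewrite le_max HM1.
  - by move=> b xb; rewrite le_max HM2 ?orbT.
  - exact: ltW.
  - exact: pt.
move=> I U Uo Fsub.
case: (pselect (exists th, Theta th)) => [[th0 Th0]|nT]; last first.
  exists set0 => //; move=> _ [th Th <-]; exfalso; apply: nT; by exists th.
have [i0 _ _] := Fsub _ (ex_intro2 _ _ th0 Th0 erefl).
have hch : forall th, exists p : I * R, Theta th ->
    [/\ 0 < p.2, U p.1 (resid pi0 f th) & forall th', Theta th' ->
      `|th - th'| < p.2 -> U p.1 (resid pi0 f th')].
  move=> th; case: (pselect (Theta th)) => Th; last by exists (i0, 1).
  have [i _ Ui] := Fsub (resid pi0 f th) (ex_intro2 _ _ th Th erefl).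
  have [e e0 He] := Uo i _ Ui.
  have [dl dl0 Hdl] := close th Th e e0.
  exists (i, dl) => _; split => // th' Th' lt; apply: He; exact: Hdl.
have [g Hg] := choice hch.
have : cover_compact Theta by rewrite -compact_cover.
move=> /(_ _ Theta (fun th => ball th (g th).2)) [].
- by move=> th _; exact: ball_open.
- move=> th Th; exists th => //; apply: ballxx; by case: (Hg th Th).
move=> D' D'sub cov.
exists ((fun th => (g th).1) @` [set` D']); first exact/finite_image/finite_fset.
move=> _ [th Th <-].
have [th1 D'th1 b] := cov th Th.
exists (g th1).1; first by exists th1.
have Th1 : Theta th1.
  by have := D'sub th1 D'th1; move/set_mem.
case: (Hg th1 Th1) => _ _ H; apply: H => //.
by rewrite -ball_normE in b.
Qed.
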